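(* Let $G=\langle\omega,\xi\mid \xi^2=1,\ \omega^2=\xi\omega^5\xi\rangle$ and let $$D_{14}\times\mathbb{Z}/3=\langle a,b,\xi\mid \xi^2=1,\ a^3=1,\ b^7=1,\ \xi b\xi=b^6,\ [a,b]=[a,\xi]=1\rangle,$$ where $[x,y]=xyx^{-1}y^{-1}$. Then the assignment $\xi\mapsto\xi$, $\omega\mapsto ab$ defines an isomorphism $G\cong D_{14}\times\mathbb{Z}/3$. *)

(* Defs.v *)
From HB Require Import structures.
From mathcomp Require Import ssreflect ssrfun ssrbool eqtype choice ssrnat monoid.
Set Implicit Arguments. Unset Strict Implicit. Unset Printing Implicit Defensive.
Local Open Scope group_scope.

Definition G_rels (H : groupType) (w xi : H) : Prop :=
  xi ^+ 2 = 1 /\ w ^+ 2 = xi * w ^+ 5 * xi.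

Definition D_rels (H : groupType) (a b xi : H) : Prop :=
  xi ^+ 2 = 1 /\ a ^+ 3 = 1 /\ b ^+ 7 = 1 /\ xi * b * xi = b ^+ 6 /\
  a * b * a^-1 * b^-1 = 1 /\ a * xi * a^-1 * xi^-1 = 1.

Definition is_hom (K H : groupType) (f : K -> H) : Prop :=
  forall x y : K, f (x * y) = f x * f y.

(* (K; g1, g2) is a presentation of the group with relations R, i.e. K together
   with g1, g2 satisfies the universal property of < g1, g2 | R >:
   the relations hold, and for every group H and elements h1, h2 of H
   satisfying R there is a unique homomorphism K -> H with g_i |-> h_i. *)
Definition presents2 (R : forall H : groupType, H -> H -> Prop)
    (K : groupType) (g1 g2 : K) : Prop :=
  R K g1 g2 /\
  forall (H : groupType) (h1 h2 : H), R H h1 h2 ->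
    (exists f : K -> H, [/\ is_hom f, f g1 = h1 & f g2 = h2]) /\
    (forall f f' : K -> H, is_hom f -> is_hom f' ->
       f g1 = f' g1 -> f g2 = f' g2 -> f =1 f').

Definition presents3 (R : forall H : groupType, H -> H -> H -> Prop)
    (K : groupType) (g1 g2 g3 : K) : Prop :=
  R K g1 g2 g3 /\
  forall (H : groupType) (h1 h2 h3 : H), R H h1 h2 h3 ->
    (exists f : K -> H, [/\ is_hom f, f g1 = h1, f g2 = h2 & f g3 = h3]) /\
    (forall f f' : K -> H, is_hom f -> is_hom f' ->
       f g1 = f' g1 -> f g2 = f' g2 -> f g3 = f' g3 -> f =1 f').

(* Main.v *)
Require Import Defs.
From HB Require Import structures.
From mathcomp Require Import ssreflect ssrfun ssrbool eqtype choice ssrnat div monoid.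
Local Open Scope group_scope.

Section Aux.
Variable H : groupType.

Lemma expg_mod (w : H) m k : w ^+ k = 1 -> w ^+ m = w ^+ (m %% k).
Proof.
move=> h; rewrite {1}(divn_eq m k) expgnDr mulnC expgnA h expg1n mul1g //.
Qed.

Arguments expg_mod {w} m {k}.

Lemma expg_eqmod (w : H) k m n : w ^+ k = 1 -> m %% k = n %% k -> w ^+ m = w ^+ n.
Proof. by move=> h e; rewrite (expg_mod m h) (expg_mod n h) e. Qed.
Arguments expg_eqmod {w k m n}.

Lemma hom1 (K : groupType) (f : K -> H) : is_hom f -> f 1 = 1.
Proof.
move=> hf; apply: (@mulgI _ (f 1)); rewrite -hf !mulg1 //.
Qed.

Lemma homX (K : groupType) (f : K -> H) x n : is_hom f -> f (x ^+ n) = f x ^+ n.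
Proof.
move=> hf; elim: n => [|n IH]; first exact: hom1.
by rewrite !expgS hf IH.
Qed.

Lemma G_to_D (w x : H) : G_rels w x -> D_rels (w ^+ 7) (w ^+ 15) x /\ w ^+ 7 * w ^+ 15 = w.
Proof.
case=> hx hw.
have xV : x^-1 = x by apply: mulg1_eq; rewrite -expg2.
have cj : forall y, y ^ x = x * y * x by move=> y; rewrite conjgE xV mulgA.
have xx : x * x = 1 by rewrite -expg2.
have xxK : forall y, x * (x * y * x) * x = y.
  by move=> y; rewrite !mulgA xx mul1g -mulgA xx mulg1.
set u := w ^ x.
have u5 : u ^+ 5 = w ^+ 2 by rewrite /u -conjXg cj hw.
have u2 : u ^+ 2 = w ^+ 5.
  by rewrite /u -conjXg cj hw xxK.
have w21 : w ^+ 21 = 1.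
  apply: (@mulIg _ (w ^+ 4)); rewrite mul1g -expgnDr.
  by rewrite (_ : 21 + 4 = 5 * 5)%N // expgnA -u2 -expgnA (_ : 2*5 = 5*2)%N // expgnA u5 -expgnA.
have u21 : u ^+ 21 = 1 by rewrite /u -conjXg w21 conj1g.
have uw : u = w ^+ 13.
  have -> : u = u ^+ 22 by rewrite (expg_mod 22 u21).
  by rewrite (_ : 22 = 2 * 11)%N // expgnA u2 -expgnA; apply: (expg_eqmod w21).
have conjw : forall n, (w ^+ n) ^ x = w ^+ (13 * n) by move=> n; rewrite conjXg -/u uw -expgnA.
have a3 : w ^+ 7 ^+ 3 = 1 by rewrite -expgnA.
have b7 : w ^+ 15 ^+ 7 = 1 by rewrite -expgnA -(expg0 w); apply: (expg_eqmod w21).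
have ax : x * w ^+ 7 = w ^+ 7 * x.
  have := conjw 7; rewrite cj (@expg_eqmod w 21 (13 * 7) 7) // => e.
  by rewrite -{2}e -mulgA xx mulg1.
split; last by rewrite -expgnDr -{2}(expg1 w); apply: (expg_eqmod w21).
split=> //; split=> //; split=> //; split.
  by rewrite -cj conjw -expgnA; apply: (expg_eqmod w21).
split.
  by rewrite -expgnDr addnC expgnDr mulgK mulgV.
by rewrite -ax mulgK mulgV.
Qed.

End Aux.
Arguments expg_eqmod {H w k m n}.
Arguments homX {H K f} x n.

Theorem lemma3p2 (K : groupType) (a b xi : K) :
  presents3 D_rels a b xi -> presents2 G_rels (a * b) xi.
Proof.
case=> [[hx [ha [hb [hxb [hab hax]]]]] U].
have cab : a * b = b * a.
  by rewrite -{2}(divg1_eq hab) mulgVK.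
have cax : a * xi = xi * a.
  by rewrite -{2}(divg1_eq hax) mulgVK.
have a21 : a ^+ 21 = 1 by rewrite (_ : 21 = 3 * 7)%N // expgnA ha expg1n.
have b21 : b ^+ 21 = 1 by rewrite (_ : 21 = 7 * 3)%N // expgnA hb expg1n.
have eA : (a * b) ^+ 7 = a.
  by rewrite expgMn // hb mulg1 (_ : 7 = 3 * 2 + 1)%N // expgnDr expgnA ha expg1n mul1g.
have eB : (a * b) ^+ 15 = b.
  rewrite expgMn // (_ : 15 = 3 * 5)%N // expgnA ha expg1n mul1g.
  by rewrite (_ : 3 * 5 = 7 * 2 + 1)%N // expgnDr expgnA hb expg1n mul1g.
split.
  split=> //.
  have xV : xi^-1 = xi by apply: mulg1_eq; rewrite -expg2.
  have cj : forall y, xi * y * xi = y ^ xi by move=> y; rewrite conjgE xV mulgA.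
  rewrite !expgMn // (_ : 5 = 3 + 2)%N // expgnDr ha mul1g.
  have cx2 : commute xi (a ^+ 2) by apply: commuteX; exact: (esym cax).
  rewrite (mulgA xi) cx2 -(mulgA (a ^+ 2)) -(mulgA (a ^+ 2)); congr (_ * _).
  rewrite cj conjXg -cj hxb -expgnA; apply: (expg_eqmod hb) => //.
move=> H h1 h2 hG.
have [hD e] := @G_to_D _ _ _ hG.
have [[f [hf fa fb fx]] Uq] := U _ _ _ _ hD.
split; first by exists f; split=> //; rewrite hf fa fb.
move=> g g' hg hg' e1 e2.
apply: (Uq g g') => //.
- by rewrite -eA !homX // e1.
- by rewrite -eB !homX // e1.
Qed.
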